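(* The group $W=\bigoplus_{i\in\mathbf{N}}W_i$ embeds in both $(\wr\mathbf{Z})^{\infty}$ and $(\mathbf{Z}\wr)^{\infty}$.
   Context: Restricted wreath product: $A\wr\mathbf{Z}=(\bigoplus_{i\in\mathbf{Z}}A)\rtimes\mathbf{Z}$. $W_0=1$, $W_i=W_{i-1}\wr\mathbf{Z}$; $(\mathbf{Z}\wr)^{\infty}$ is the ascending union of the $W_i$ with $W_i$ embedded in $W_{i+1}$ as the index-$0$ base summand. For permutation groups $(K,X)$, $(L,Y)$, the permutation wreath product $K\wr L\le\mathrm{Sym}(X\times Y)$ is generated by $(x,y)\mapsto(x\kappa,y)$, $(x,y')\mapsto(x,y')$ for $y'\neq y$ ($\kappa\in K$, $y\in Y$) and $(x,y)\mapsto(x,y\lambda)$ ($\lambda\in L$). $P_1=\mathbf{Z}$ on $\mathbf{Z}$ by translation, $P_{k+1}=\mathbf{Z}\wr P_k$ (permutation wreath product) with $P_k$ the top group; $(\wr\mathbf{Z})^{\infty}$ is the ascending union of the $P_k$. *)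

(* Defs.v *)
(* Infinite groups are represented concretely as "setoid groups":
   a carrier type, a membership predicate (the actual group is the set of
   members), an equality relation, and the group operations. *)
From Stdlib Require Import ZArith Arith.

Set Implicit Arguments.

Record Grp : Type := MkGrp {
  gT : Type;
  gmem : gT -> Prop;
  geq : gT -> gT -> Prop;
  gmul : gT -> gT -> gT;
  ginv : gT -> gT;
  gone : gT }.

Definition embeds (G H : Grp) : Prop :=
  exists f : gT G -> gT H,
    (forall x, gmem G x -> gmem H (f x)) /\
    (forall x y, gmem G x -> gmem G y -> (geq H (f x) (f y) <-> geq G x y)) /\
    (forall x y, gmem G x -> gmem G y ->
        geq H (f (gmul G x y)) (gmul H (f x) (f y))).

Definition trivG : Grp :=
  MkGrp (fun _ : unit => True) (fun _ _ => True) (fun _ _ => tt) (fun _ => tt) tt.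

(** Restricted wreath product A wr Z = (sum_{i in Z} A) x| Z, with Z acting
    by shifting indices: (f,n)(g,m) = (i |-> f i * g (i - n), n + m). *)
Definition wrZ (A : Grp) : Grp :=
  MkGrp (gT := ((Z -> gT A) * Z)%type)
    (fun p => (forall i, gmem A (fst p i)) /\
              exists N : Z, forall i, (N < Z.abs i)%Z -> geq A (fst p i) (gone A))
    (fun p q => (forall i, geq A (fst p i) (fst q i)) /\ snd p = snd q)
    (fun p q => (fun i => gmul A (fst p i) (fst q (i - snd p)%Z), (snd p + snd q)%Z))
    (fun p => (fun i => ginv A (fst p (i + snd p)%Z), (- snd p)%Z))
    (fun _ => gone A, 0%Z).

Fixpoint Wg (i : nat) : Grp :=
  match i with
  | O => trivG
  | S j => wrZ (Wg j)
  end.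

Definition Wsum : Grp :=
  MkGrp (gT := forall i : nat, gT (Wg i))
    (fun x => (forall i, gmem (Wg i) (x i)) /\
              exists N : nat, forall i, (N < i)%nat -> geq (Wg i) (x i) (gone (Wg i)))
    (fun x y => forall i, geq (Wg i) (x i) (y i))
    (fun x y => fun i => gmul (Wg i) (x i) (y i))
    (fun x => fun i => ginv (Wg i) (x i))
    (fun i => gone (Wg i)).

(** Ascending union (direct limit) of a chain G 0 -> G 1 -> ... along maps phi. *)
Section DirLim.
Variable G : nat -> Grp.
Variable phi : forall m, gT (G m) -> gT (G (S m)).

(* image of x : G i in G n (meaningful for i <= n) *)
Local Unset Implicit Arguments.
Fixpoint lift (i : nat) (x : gT (G i)) (n : nat) {struct n} : gT (G n) :=
  match Nat.eq_dec i n with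
  | left e => eq_rect i (fun k => gT (G k)) x n e
  | right _ =>
      match n return gT (G n) with
      | O => gone (G O)
      | S m => phi m (lift i x m)
      end
  end.

Definition dirlim : Grp :=
  MkGrp (gT := {i : nat & gT (G i)})
    (fun p => gmem (G (projT1 p)) (projT2 p))
    (fun p q => exists n, (projT1 p <= n)%nat /\ (projT1 q <= n)%nat /\
                  geq (G n) (lift _ (projT2 p) n) (lift _ (projT2 q) n))
    (fun p q => existT (fun k => gT (G k)) (Nat.max (projT1 p) (projT1 q))
                  (gmul _ (lift _ (projT2 p) _) (lift _ (projT2 q) _)))
    (fun p => existT (fun k => gT (G k)) (projT1 p) (ginv _ (projT2 p)))
    (existT (fun k => gT (G k)) O (gone (G O))).
End DirLim.

(** (Z wr)^infty: union of the W_i, W_i embedded in W_{i+1} as index-0 summand *)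
Definition ZwrInf : Grp :=
  dirlim Wg (fun i (a : gT (Wg i)) =>
     ((fun j : Z => if Z.eq_dec j 0 then a else gone (Wg i)), 0%Z)
     : gT (Wg (S i))).

(** Permutations of X, represented by a function and its inverse; the product
    is composition with right actions: x (s t) = (x s) t. *)
Definition perm (X : Type) : Type := ((X -> X) * (X -> X))%type.

Definition isperm X (s : perm X) : Prop :=
  (forall x, snd s (fst s x) = x) /\ (forall x, fst s (snd s x) = x).

Definition pmul X (s t : perm X) : perm X :=
  (fun x => fst t (fst s x), fun x => snd s (snd t x)).
Definition pinv X (s : perm X) : perm X := (snd s, fst s).
Definition pid X : perm X := (fun x => x, fun x => x).

Inductive gen X (S : perm X -> Prop) : perm X -> Prop :=
| gen_base s : S s -> gen S s
| gen_one : gen S (pid X)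
| gen_mul s t : gen S s -> gen S t -> gen S (pmul s t)
| gen_inv s : gen S s -> gen S (pinv s)
| gen_ext s t : gen S s -> (forall x, fst s x = fst t x) ->
                (forall x, snd s x = snd t x) -> gen S t.

Definition PermG (X : Type) (P : perm X -> Prop) : Grp :=
  MkGrp (gT := perm X) (fun s => isperm s /\ P s)
    (fun s t => forall x, fst s x = fst t x) (@pmul X) (@pinv X) (pid X).

Definition basegen X Y (deqY : forall a b : Y, {a = b} + {a <> b})
  (k : perm X) (y : Y) : perm (X * Y) :=
  (fun p => if deqY (snd p) y then (fst k (fst p), snd p) else p,
   fun p => if deqY (snd p) y then (snd k (fst p), snd p) else p).

Definition topgen X Y (l : perm Y) : perm (X * Y) :=
  (fun p => (fst p, fst l (snd p)), fun p => (fst p, snd l (snd p))).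

Definition pwr X Y (deqY : forall a b : Y, {a = b} + {a <> b})
  (K : perm X -> Prop) (L : perm Y -> Prop) : perm (X * Y) -> Prop :=
  gen (fun s => (exists k y, K k /\ s = basegen deqY k y) \/
                (exists l, L l /\ s = topgen X l)).

Definition transl : perm Z -> Prop :=
  fun s => exists n : Z, s = (fun x => (x + n)%Z, fun x => (x - n)%Z).

(** Yt n = Z^(n+1), the set on which P_(n+1) acts *)
Fixpoint Yt (n : nat) : Type :=
  match n with
  | O => Z
  | S m => (Z * Yt m)%type
  end.

Definition Ydec (n : nat) : forall a b : Yt n, {a = b} + {a <> b}.
Proof.
  induction n as [|n IH]; simpl.
  - exact Z.eq_dec.
  - intros a b; decide equality; solve [apply IH | apply Z.eq_dec].
Defined.

(** Ppred n = P_(n+1): P_1 = translations, P_(k+1) = Z wr P_k *)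
Fixpoint Ppred (n : nat) : perm (Yt n) -> Prop :=
  match n with
  | O => transl
  | S m => pwr (Ydec m) transl (Ppred m)
  end.

Definition Pg (n : nat) : Grp := @PermG (Yt n) (Ppred n).

(** (wr Z)^infty: union of the P_k, P_k embedded in P_(k+1) as the top group *)
Definition wrZInf : Grp :=
  dirlim Pg (fun n (l : gT (Pg n)) => topgen Z l : gT (Pg (S n))).

(* Main.v *)
Require Import Defs.
From Stdlib Require Import ZArith Arith Lia List Eqdep_dec FunctionalExtensionality ClassicalEpsilon.
Open Scope Z_scope.


Lemma Wgeq_refl : forall k (a : gT (Wg k)), geq (Wg k) a a.
Proof. induction k; simpl; intros; [exact I | split; auto]. Qed.

Lemma Wgeq_sym : forall k (a b : gT (Wg k)), geq (Wg k) a b -> geq (Wg k) b a.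
Proof. induction k; simpl; intros a b h; [exact I | destruct h as [h1 h2]; split; auto]. Qed.

Lemma Wgeq_trans : forall k (a b c : gT (Wg k)), geq (Wg k) a b -> geq (Wg k) b c -> geq (Wg k) a c.
Proof. induction k; simpl; intros a b c h h'; [exact I | destruct h as [h1 h2], h' as [h3 h4]; split; [intro i; eauto | congruence]]. Qed.

Lemma Wmul_geq : forall k (a a' b b' : gT (Wg k)), geq _ a a' -> geq _ b b' ->
  geq _ (gmul _ a b) (gmul _ a' b').
Proof.
  induction k; simpl; intros a a' b b' h h'; [exact I|].
  destruct h as [h1 h2], h' as [h3 h4]; split; simpl.
  - intro i; rewrite h2; apply IHk; auto.
  - congruence.
Qed.

Lemma Wmul_one : forall k, geq (Wg k) (gmul _ (gone _) (gone _)) (gone _).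
Proof. induction k; simpl; [exact I | split; [intros; apply IHk | reflexivity]]. Qed.

Lemma Wmem_one : forall k, gmem (Wg k) (gone _).
Proof.
  induction k; simpl; [exact I|]. split; [intros; apply IHk|].
  exists 0; intros; apply Wgeq_refl.
Qed.

Lemma Wmem_mul : forall k (a b : gT (Wg k)), gmem _ a -> gmem _ b -> gmem _ (gmul _ a b).
Proof.
  induction k; simpl; intros a b ha hb; [exact I|].
  destruct ha as [ha [Na hNa]], hb as [hb [Nb hNb]]. split; simpl.
  - intro i; apply IHk; auto.
  - exists (Z.abs Na + Z.abs Nb + Z.abs (snd a)); intros i hi.
    eapply Wgeq_trans; [apply Wmul_geq; [apply hNa | apply hNb] | apply Wmul_one]; lia.
Qed.

Lemma Wsum_mem_mul : forall x y, gmem Wsum x -> gmem Wsum y -> gmem Wsum (gmul Wsum x y).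
Proof.
  intros x y [hx [Nx hNx]] [hy [Ny hNy]]; simpl; split.
  - intro i; apply Wmem_mul; auto.
  - exists (Nat.max Nx Ny); intros i hi.
    eapply Wgeq_trans; [apply Wmul_geq; [apply hNx | apply hNy] | apply Wmul_one]; lia.
Qed.

Lemma lift_self : forall G phi i (x : gT (G i)), lift G phi i x i = x.
Proof.
  intros G phi i x. destruct i as [|i]; cbn [lift];
  [destruct (Nat.eq_dec 0 0) as [e|ne] | destruct (Nat.eq_dec (S i) (S i)) as [e|ne]];
  try (rewrite (UIP_refl_nat _ e); reflexivity); congruence.
Qed.

Lemma lift_S : forall G phi i (x : gT (G i)) n, (i <= n)%nat ->
  lift G phi i x (S n) = phi n (lift G phi i x n).
Proof.
  intros G phi i x n h. simpl. destruct (Nat.eq_dec i (S n)); [lia | reflexivity].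
Qed.

Lemma lift_trans : forall G phi i (x : gT (G i)) j n, (i <= j)%nat -> (j <= n)%nat ->
  lift G phi j (lift G phi i x j) n = lift G phi i x n.
Proof.
  intros G phi i x j n hij hjn. induction hjn.
  - apply lift_self.
  - rewrite !lift_S by lia. now rewrite IHhjn.
Qed.

Lemma lift_geq : forall (H : nat -> Grp) (phi : forall m, gT (H m) -> gT (H (S m))),
  (forall n a b, geq (H n) a b -> geq (H (S n)) (phi n a) (phi n b)) ->
  forall i (a b : gT (H i)) n, (i <= n)%nat -> geq _ a b ->
  geq _ (lift H phi i a n) (lift H phi i b n).
Proof.
  intros H phi hphi i a b n hn hab. induction hn.
  - now rewrite !lift_self.
  - rewrite !lift_S by lia. auto.
Qed.

Lemma lift_mul : forall (H : nat -> Grp) (phi : forall m, gT (H m) -> gT (H (S m))),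
  (forall n a b c, geq (H n) a b -> geq (H n) b c -> geq (H n) a c) ->
  (forall n a b, geq (H n) a b -> geq (H (S n)) (phi n a) (phi n b)) ->
  (forall n a b, geq (H (S n)) (phi n (gmul _ a b)) (gmul _ (phi n a) (phi n b))) ->
  (forall n a, geq (H n) a a) ->
  forall i (a b : gT (H i)) n, (i <= n)%nat ->
  geq _ (lift H phi i (gmul _ a b) n) (gmul _ (lift H phi i a n) (lift H phi i b n)).
Proof.
  intros H phi htr hphi hpm hrf i a b n hn. induction hn.
  - rewrite !lift_self. apply hrf.
  - rewrite !lift_S by lia. eapply htr; [apply hphi; exact IHhn | apply hpm].
Qed.

Definition bnd (x : gT Wsum) : nat :=
  epsilon (inhabits 0%nat) (fun N => forall i, (N < i)%nat -> geq (Wg i) (x i) (gone (Wg i))).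

Lemma bnd_spec : forall x, gmem Wsum x -> forall i, (bnd x < i)%nat -> geq (Wg i) (x i) (gone (Wg i)).
Proof.
  intros x [_ hx]. unfold bnd. apply (epsilon_spec (inhabits 0%nat) _ hx).
Qed.

Lemma embeds_gen : forall (H : nat -> Grp) (phi : forall m, gT (H m) -> gT (H (S m))),
  (forall n a, geq (H n) a a) ->
  (forall n a b, geq (H n) a b -> geq (H n) b a) ->
  (forall n a b c, geq (H n) a b -> geq (H n) b c -> geq (H n) a c) ->
  (forall n a a' b b', geq (H n) a a' -> geq (H n) b b' -> geq (H n) (gmul _ a b) (gmul _ a' b')) ->
  (forall n a b, geq (H n) a b -> geq (H (S n)) (phi n a) (phi n b)) ->
  (forall n a b, geq (H (S n)) (phi n (gmul _ a b)) (gmul _ (phi n a) (phi n b))) ->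
  forall (lvl : nat -> nat),
  (forall N K, (N <= K)%nat -> (lvl N <= lvl K)%nat) ->
  (forall K, (K <= lvl K)%nat) ->
  forall (E : forall K, gT Wsum -> gT (H (lvl K))),
  (forall K x, gmem Wsum x -> gmem _ (E K x)) ->
  (forall K x y, gmem Wsum x -> gmem Wsum y -> geq Wsum x y -> geq _ (E K x) (E K y)) ->
  (forall K x y, gmem Wsum x -> gmem Wsum y -> geq _ (E K (gmul Wsum x y)) (gmul _ (E K x) (E K y))) ->
  (forall K x y, gmem Wsum x -> gmem Wsum y -> geq _ (E K x) (E K y) -> forall i, (i <= K)%nat -> geq (Wg i) (x i) (y i)) ->
  (forall N K x, gmem Wsum x -> (N <= K)%nat -> (forall i, (N < i)%nat -> geq (Wg i) (x i) (gone (Wg i))) ->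
      geq _ (lift H phi (lvl N) (E N x) (lvl K)) (E K x)) ->
  embeds Wsum (dirlim H phi).
Proof.
  intros H phi hrf hsy htr hml hphi hpm lvl hmono hge E Emem Egeq Emul Einj Ecomp.
  exists (fun x => existT (fun k => gT (H k)) (lvl (bnd x)) (E (bnd x) x)).
  split; [|split].
  - intros x hx; simpl; auto.
  - intros x y hx hy; simpl; split.
    + intros [n [h1 [h2 h3]]].
      set (K := Nat.max n (Nat.max (bnd x) (bnd y))).
      assert (hK : (n <= lvl K)%nat) by (specialize (hge K); unfold K in *; lia).
      assert (hx' := Ecomp (bnd x) K x hx ltac:(unfold K; lia) (bnd_spec x hx)).
      assert (hy' := Ecomp (bnd y) K y hy ltac:(unfold K; lia) (bnd_spec y hy)).
      rewrite <- (lift_trans H phi _ _ n (lvl K)) in hx' by auto.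
      rewrite <- (lift_trans H phi _ _ n (lvl K)) in hy' by auto.
      assert (hE : geq _ (E K x) (E K y)).
      { eapply htr; [apply hsy; exact hx'|]. eapply htr; [|exact hy'].
        apply lift_geq; auto. }
      intro i. destruct (le_lt_dec i K) as [hi|hi].
      * eapply Einj; eauto.
      * eapply Wgeq_trans; [apply (bnd_spec x hx); lia|].
        apply Wgeq_sym, (bnd_spec y hy); lia.
    + intro hxy. set (K := Nat.max (bnd x) (bnd y)).
      exists (lvl K); split; [apply hmono; unfold K; lia| split; [apply hmono; unfold K; lia|]].
      eapply htr; [apply (Ecomp (bnd x) K x hx ltac:(unfold K; lia) (bnd_spec x hx))|].
      eapply htr; [apply (Egeq K x y hx hy hxy)|].
      apply hsy, (Ecomp (bnd y) K y hy ltac:(unfold K; lia) (bnd_spec y hy)).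
  - intros x y hx hy.
    assert (hxy := Wsum_mem_mul x y hx hy).
    remember (gmul Wsum x y) as xy eqn:Exy.
    set (K := Nat.max (bnd xy) (Nat.max (bnd x) (bnd y))).
    assert (h1 : (lvl (bnd xy) <= lvl K)%nat) by (apply hmono; unfold K; lia).
    assert (h2 : (lvl (bnd x) <= lvl K)%nat) by (apply hmono; unfold K; lia).
    assert (h3 : (lvl (bnd y) <= lvl K)%nat) by (apply hmono; unfold K; lia).
    cbn [dirlim geq projT1 projT2 gmul].
    exists (lvl K); split; [exact h1|split; [lia|]].
    eapply htr; [apply (Ecomp (bnd xy) K xy hxy ltac:(unfold K; lia) (bnd_spec _ hxy))|].
    subst xy.
    eapply htr; [apply (Emul K x y hx hy)|].
    apply hsy. eapply htr; [apply lift_mul; auto; lia|].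
    rewrite !(lift_trans H phi) by lia.
    apply hml.
    + apply (Ecomp (bnd x) K x hx ltac:(unfold K; lia) (bnd_spec x hx)).
    + apply (Ecomp (bnd y) K y hy ltac:(unfold K; lia) (bnd_spec y hy)).
Qed.

Definition phiZ (i : nat) (a : gT (Wg i)) : gT (Wg (S i)) :=
  ((fun j : Z => if Z.eq_dec j 0 then a else gone (Wg i)), 0%Z).

Fixpoint FZ (K : nat) : gT Wsum -> gT (Wg (S K)) :=
  match K return gT Wsum -> gT (Wg (S K)) with
  | O => fun _ => gone (Wg 1)
  | S K' => fun x => ((fun j : Z => if Z.eq_dec j 0 then FZ K' x
                        else if Z.eq_dec j 1 then x (S K') else gone (Wg (S K'))), 0%Z)
  end.

Lemma phiZ_geq : forall n a b, geq (Wg n) a b -> geq (Wg (S n)) (phiZ n a) (phiZ n b).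
Proof.
  intros n a b h. unfold phiZ. split; [|reflexivity]. intro i; cbn [fst snd gmul Wg wrZ].
  destruct (Z.eq_dec i 0); auto using Wgeq_refl.
Qed.

Lemma phiZ_mul : forall n a b, geq (Wg (S n)) (phiZ n (gmul _ a b)) (gmul _ (phiZ n a) (phiZ n b)).
Proof.
  intros n a b. unfold phiZ. split; [|reflexivity]. intro i; cbn [fst snd gmul Wg wrZ].
  rewrite Z.sub_0_r. destruct (Z.eq_dec i 0).
  - apply Wgeq_refl.
  - apply Wgeq_sym, Wmul_one.
Qed.

Lemma FZ_mem : forall K x, gmem Wsum x -> gmem _ (FZ K x).
Proof.
  induction K; intros x hx.
  - apply Wmem_one.
  - cbn [FZ phiZ]. split.
    + intro j; cbn [fst snd gmul Wg wrZ]. destruct (Z.eq_dec j 0); [apply IHK; auto|].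
      destruct (Z.eq_dec j 1); [exact (proj1 hx (S K)) | exact (Wmem_one (S K))].
    + exists 1; intros j hj; simpl.
      destruct (Z.eq_dec j 0); [lia|]. destruct (Z.eq_dec j 1); [lia|]. exact (Wgeq_refl (S K) _).
Qed.

Lemma FZ_geq : forall K x y, geq Wsum x y -> geq _ (FZ K x) (FZ K y).
Proof.
  induction K; intros x y h.
  - apply Wgeq_refl.
  - cbn [FZ phiZ]. split; [|reflexivity]. intro j; cbn [fst snd gmul Wg wrZ].
    destruct (Z.eq_dec j 0); [apply IHK; auto|].
    destruct (Z.eq_dec j 1); [exact (h (S K)) | exact (Wgeq_refl (S K) _)].
Qed.

Lemma FZ_mul : forall K x y, geq _ (FZ K (gmul Wsum x y)) (gmul _ (FZ K x) (FZ K y)).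
Proof.
  induction K; intros x y.
  - apply Wgeq_sym, Wmul_one.
  - cbn [FZ phiZ]. split; [|reflexivity]. intro j; cbn [fst snd gmul Wg wrZ]. rewrite Z.sub_0_r.
    destruct (Z.eq_dec j 0); [apply IHK|].
    destruct (Z.eq_dec j 1); [exact (Wgeq_refl (S K) _) | exact (Wgeq_sym (S K) _ _ (Wmul_one (S K)))].
Qed.

Lemma FZ_inj : forall K x y, geq _ (FZ K x) (FZ K y) -> forall i, (i <= K)%nat -> geq (Wg i) (x i) (y i).
Proof.
  induction K; intros x y h i hi.
  - assert (i = 0%nat) by lia; subst; exact I.
  - destruct h as [h _]. simpl in h.
    destruct (Nat.eq_dec i (S K)) as [->|ne].
    + specialize (h 1). simpl in h. exact h.
    + apply IHK; [|lia]. specialize (h 0). simpl in h. exact h.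
Qed.

Lemma FZ_compat : forall N K x, (N <= K)%nat -> (forall i, (N < i)%nat -> geq (Wg i) (x i) (gone (Wg i))) ->
  geq _ (lift Wg phiZ (S N) (FZ N x) (S K)) (FZ K x).
Proof.
  intros N K x hNK hx. induction hNK.
  - rewrite lift_self. apply Wgeq_refl.
  - rewrite lift_S by lia. eapply Wgeq_trans; [apply phiZ_geq; exact IHhNK|].
    unfold phiZ; cbn [FZ]. split; [|reflexivity]. intro j; cbn [fst snd].
    destruct (Z.eq_dec j 0); [exact (Wgeq_refl (S m) _)|].
    destruct (Z.eq_dec j 1); [exact (Wgeq_sym (S m) _ _ (hx (S m) ltac:(lia))) | exact (Wgeq_refl (S m) _)].
Qed.

Lemma embed_Z : embeds Wsum ZwrInf.
Proof.
  apply (embeds_gen Wg phiZ Wgeq_refl Wgeq_sym Wgeq_trans Wmul_geq phiZ_geq phiZ_mul S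
    ltac:(intros; lia) ltac:(intros; lia) FZ).
  - intros; apply FZ_mem; auto.
  - intros; apply FZ_geq; auto.
  - intros; apply FZ_mul.
  - intros K x y _ _ h; apply FZ_inj; auto.
  - intros N K x _ h1 h2; apply FZ_compat; auto.
Qed.

Fixpoint yapp (a b : nat) : Yt a -> Yt b -> Yt (a + S b) :=
  match a return Yt a -> Yt b -> Yt (a + S b) with
  | O => fun x y => (x, y)
  | S a' => fun x y => (fst x, yapp a' b (snd x) y)
  end.

Fixpoint unapp (a b : nat) : Yt (a + S b) -> Yt a * Yt b :=
  match a return Yt (a + S b) -> Yt a * Yt b with
  | O => fun p => p
  | S a' => fun p => let q := unapp a' b (snd p) in ((fst p, fst q), snd q)
  end.

Lemma unapp_app : forall a b x y, unapp a b (yapp a b x y) = (x, y).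
Proof.
  induction a; intros b x y; simpl; [reflexivity|].
  rewrite IHa. destruct x; reflexivity.
Qed.

Lemma app_unapp : forall a b p, yapp a b (fst (unapp a b p)) (snd (unapp a b p)) = p.
Proof.
  induction a; intros b p; simpl; [destruct p; reflexivity|].
  rewrite IHa. destruct p; reflexivity.
Qed.

Lemma app_inj : forall a b x y x' y', yapp a b x y = yapp a b x' y' -> x = x' /\ y = y'.
Proof.
  intros a b x y x' y' h. apply (f_equal (unapp a b)) in h. rewrite !unapp_app in h.
  inversion h; auto.
Qed.

Lemma perm_ext : forall X (s t : perm X), (forall x, fst s x = fst t x) -> (forall x, snd s x = snd t x) -> s = t.
Proof.
  intros X [s1 s2] [t1 t2] h1 h2; simpl in *.
  f_equal; apply functional_extensionality; auto.
Qed.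

Lemma Ppred_one : forall n, Ppred n (pid _).
Proof.
  destruct n; simpl.
  - exists 0. apply perm_ext; simpl; intros; lia.
  - apply gen_one.
Qed.

Lemma Ppred_mul : forall n s t, Ppred n s -> Ppred n t -> Ppred n (pmul s t).
Proof.
  destruct n; simpl; intros s t hs ht.
  - destruct hs as [a ->], ht as [b ->]. exists (a + b). apply perm_ext; simpl; intros; lia.
  - apply gen_mul; auto.
Qed.

Lemma Ppred_inv : forall n s, Ppred n s -> Ppred n (pinv s).
Proof.
  destruct n; simpl; intros s hs.
  - destruct hs as [a ->]. exists (- a). apply perm_ext; simpl; intros; lia.
  - apply gen_inv; auto.
Qed.

Lemma isperm_mul : forall X (s t : perm X), isperm s -> isperm t -> isperm (pmul s t).
Proof.
  intros X s t [h1 h2] [h3 h4]; split; simpl; intros; congruence.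
Qed.

Lemma isperm_one : forall X, isperm (pid X).
Proof. split; reflexivity. Qed.

Definition fib (a b : nat) (c : Yt b) (s : perm (Yt a)) : perm (Yt (a + S b)) :=
  (fun p => let q := unapp a b p in
     if Ydec b (snd q) c then yapp a b (fst s (fst q)) (snd q) else p,
   fun p => let q := unapp a b p in
     if Ydec b (snd q) c then yapp a b (snd s (fst q)) (snd q) else p).

Definition top (a b : nat) (l : perm (Yt b)) : perm (Yt (a + S b)) :=
  (fun p => let q := unapp a b p in yapp a b (fst q) (fst l (snd q)),
   fun p => let q := unapp a b p in yapp a b (fst q) (snd l (snd q))).

Lemma fib_one : forall a b c, fib a b c (pid _) = pid _.
Proof.
  intros a b c. apply perm_ext; intro p; simpl;
  destruct (Ydec b _ c); auto; apply app_unapp.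
Qed.

Lemma fib_mul : forall a b c s t, fib a b c (pmul s t) = pmul (fib a b c s) (fib a b c t).
Proof.
  intros a b c s t. apply perm_ext; intro p; simpl.
  - destruct (Ydec b (snd (unapp a b p)) c) as [e|ne].
    + rewrite unapp_app; simpl. destruct (Ydec b _ c); [reflexivity|congruence].
    + destruct (Ydec b _ c); [congruence|reflexivity].
  - destruct (Ydec b (snd (unapp a b p)) c) as [e|ne].
    + rewrite unapp_app; simpl. destruct (Ydec b _ c); [reflexivity|congruence].
    + destruct (Ydec b _ c); [congruence|reflexivity].
Qed.

Lemma top_mul : forall a b l l', top a b (pmul l l') = pmul (top a b l) (top a b l').
Proof.
  intros. apply perm_ext; intro p; simpl; rewrite unapp_app; reflexivity.
Qed.

Lemma isperm_fib : forall a b c s, isperm s -> isperm (fib a b c s).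
Proof.
  intros a b c s [h1 h2]; split; intro p; simpl;
  destruct (Ydec b (snd (unapp a b p)) c) as [e|ne].
  - rewrite unapp_app; simpl. destruct (Ydec b _ c) as [_|ne]; [|congruence].
    rewrite h1. apply app_unapp.
  - destruct (Ydec b _ c); congruence.
  - rewrite unapp_app; simpl. destruct (Ydec b _ c) as [_|ne]; [|congruence].
    rewrite h2. apply app_unapp.
  - destruct (Ydec b _ c); congruence.
Qed.

Lemma isperm_top : forall a b l, isperm l -> isperm (top a b l).
Proof.
  intros a b l [h1 h2]; split; intro p; simpl; rewrite unapp_app; simpl;
  [rewrite h1 | rewrite h2]; apply app_unapp.
Qed.

Lemma top_P : forall a b l, Ppred b l -> Ppred (a + S b) (top a b l).
Proof.
  induction a; intros b l hl; simpl.
  - apply gen_base. right. exists l. split; auto.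
  - apply gen_base. right. exists (top a b l). split; [apply IHa; auto|].
    apply perm_ext; intros [z r]; reflexivity.
Qed.

Lemma fib_P : forall a b c s, Ppred a s -> Ppred (a + S b) (fib a b c s).
Proof.
  induction a; intros b c s hs.
  - simpl. apply gen_base. left. exists s, c. split; [exact hs|].
    apply perm_ext; intros [z r]; reflexivity.
  - change (gen (fun s0 => (exists k y, transl k /\ s0 = basegen (Ydec (a + S b)) k y) \/
                (exists l, Ppred (a + S b) l /\ s0 = topgen Z l)) (fib (S a) b c s)).
    simpl in hs. induction hs as [s hs| |s t hs IHs ht IHt|s hs IHs|s t hs IHs e1 e2].
    + destruct hs as [[k [y [hk ->]]] | [l [hl ->]]].
      * apply gen_base. left. exists k, (yapp a b y c). split; [exact hk|].
        apply perm_ext; intros [z r]; simpl;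
        pose proof (app_unapp a b r) as hr;
        destruct (unapp a b r) as [u v]; simpl in *;
        destruct (Ydec b v c) as [e|ne]; destruct (Ydec a u y) as [e'|ne'];
        destruct (Ydec (a + S b) r (yapp a b y c)) as [e''|ne''];
        subst; simpl; try reflexivity;
        try (rewrite <- hr; reflexivity);
        try (apply app_inj in e''; destruct e''; congruence);
        exfalso; auto.
      * apply gen_base. right. exists (fib a b c l). split; [apply IHa; auto|].
        apply perm_ext; intros [z r]; simpl;
        destruct (unapp a b r) as [u v]; simpl;
        destruct (Ydec b v c); reflexivity.
    + rewrite fib_one. apply gen_one.
    + rewrite fib_mul. apply gen_mul; auto.
    + replace (fib (S a) b c (pinv s)) with (pinv (fib (S a) b c s)) by (apply perm_ext; reflexivity).
      apply gen_inv; auto.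
    + replace t with s; auto. apply perm_ext; auto.
Qed.

Definition phiP (n : nat) (l : gT (Pg n)) : gT (Pg (S n)) := topgen Z l.

Lemma lift_top : forall a b l, lift Pg phiP b l (a + S b)%nat = top a b l.
Proof.
  induction a; intros b l.
  - simpl plus. rewrite lift_S by lia. rewrite lift_self.
    apply perm_ext; intros [z r]; reflexivity.
  - change (lift Pg phiP b l (S (a + S b))%nat = top (S a) b l).
    rewrite lift_S by lia. rewrite IHa.
    apply perm_ext; intros [z r]; reflexivity.
Qed.

Lemma yapp_surj : forall a b p, exists y j, p = yapp a b y j.
Proof.
  intros a b p. exists (fst (unapp a b p)), (snd (unapp a b p)). symmetry; apply app_unapp.
Qed.

Fixpoint gk (k : nat) : nat := match k with O => O | S k => (gk k + 1)%nat end.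

Fixpoint pt (v : Z) (a : nat) : Yt a :=
  match a return Yt a with O => v | S a' => (v, pt v a') end.

Fixpoint iota (k : nat) : gT (Wg (S k)) -> perm (Yt (gk k)) :=
  match k return gT (Wg (S k)) -> perm (Yt (gk k)) with
  | O => fun w => (fun x : Z => x + - snd w, fun x : Z => x - - snd w)
  | S k' => fun w =>
     (fun p => let q := unapp (gk k') 0 p in
        yapp (gk k') 0 (fst (iota k' (fst w (snd q))) (fst q)) (snd q + - snd w),
      fun p => let q := unapp (gk k') 0 p in
        yapp (gk k') 0 (snd (iota k' (fst w (snd q - - snd w))) (fst q)) (snd q - - snd w))
  end.

Lemma iota_isperm : forall k w, isperm (iota k w).
Proof.
  induction k; intros w; split; intro p; simpl.
  - lia.
  - lia.
  - destruct w as [f n]. destruct (yapp_surj (gk k) 0 p) as [y [j ->]]. rewrite !unapp_app; simpl; rewrite ?unapp_app; simpl.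
    replace (j + - n - - n) with j by (simpl in j; lia).
    rewrite (proj1 (IHk _)). reflexivity.
  - destruct w as [f n]. destruct (yapp_surj (gk k) 0 p) as [y [j ->]]. rewrite !unapp_app; simpl; rewrite ?unapp_app; simpl.
    replace (j - - n + - n) with j by (simpl in j; lia).
    rewrite (proj2 (IHk _)). reflexivity.
Qed.

Lemma iota_mul : forall k w w', iota k (gmul _ w w') = pmul (iota k w) (iota k w').
Proof.
  induction k; intros w w'.
  - apply perm_ext; intro p; simpl; lia.
  - destruct w as [f n], w' as [f' n'].
    change (gmul (Wg (S (S k))) (f, n) (f', n')) with
      ((fun i => gmul (Wg (S k)) (f i) (f' (i - n)), n + n') : gT (Wg (S (S k)))).
    apply perm_ext; intro p; destruct (yapp_surj (gk k) 0 p) as [y [j ->]];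
    cbn [iota fst snd pmul]; rewrite !unapp_app; cbn [fst snd]; rewrite ?unapp_app; cbn [fst snd];
    rewrite IHk; cbn [fst snd pmul].
    + replace (j - n) with (j + - n) by (simpl in j; lia).
      f_equal. simpl in j; lia.
    + replace (j - - (n + n') - n) with (j - - n') by (simpl in j; lia).
      replace (j - - (n + n')) with (j - - n' - - n) by (simpl in j; lia).
      reflexivity.
Qed.

Lemma iota_geq : forall k w w', geq _ w w' -> iota k w = iota k w'.
Proof.
  induction k; intros [f n] [f' n'] [h1 h2]; simpl in h2; subst n'.
  - reflexivity.
  - apply perm_ext; intro p; cbn [iota fst snd]; rewrite (IHk _ _ (h1 _)); reflexivity.
Qed.

Lemma iota_one : forall k, iota k (gone _) = pid _.
Proof.
  induction k.
  - apply perm_ext; intro p; simpl; lia.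
  - change (gone (Wg (S (S k)))) with ((fun _ : Z => gone (Wg (S k)), 0) : gT (Wg (S (S k)))).
    apply perm_ext; intro p; destruct (yapp_surj (gk k) 0 p) as [y [j ->]];
    cbn [iota fst snd pid]; rewrite !unapp_app; cbn [fst snd]; rewrite IHk; cbn [fst snd pid];
    f_equal; simpl in j; lia.
Qed.

Lemma iota_inj : forall k w w', (forall y, fst (iota k w) y = fst (iota k w') y) -> geq _ w w'.
Proof.
  induction k; intros [f n] [f' n'] h.
  - split; [intros; exact I|]. specialize (h 0). simpl in h |- *. lia.
  - assert (hn : n = n').
    { specialize (h (yapp (gk k) 0 (pt 0 (gk k)) 0)). cbn [iota fst snd] in h. rewrite !unapp_app in h.
      apply app_inj in h. destruct h as [_ h]. simpl in h. lia. }
    split; [|exact hn]. intro i. apply IHk. intro y.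
    specialize (h (yapp (gk k) 0 y i)). cbn [iota fst snd] in h. rewrite !unapp_app in h.
    apply app_inj in h. exact (proj1 h).
Qed.

Definition Fib (a : nat) (h : Z -> perm (Yt a)) : perm (Yt (a + S 0)) :=
  (fun p => let q := unapp a 0 p in yapp a 0 (fst (h (snd q)) (fst q)) (snd q),
   fun p => let q := unapp a 0 p in yapp a 0 (snd (h (snd q)) (fst q)) (snd q)).

Lemma Fib_P : forall a (l : list Z) (h : Z -> perm (Yt a)), (forall j, Ppred a (h j)) ->
  (forall j, ~ In j l -> h j = pid _) -> Ppred (a + S 0) (Fib a h).
Proof.
  intros a l. induction l as [|j0 l IH]; intros h hP hl.
  - replace (Fib a h) with (pid (Yt (a + S 0))). apply Ppred_one.
    apply perm_ext; intro p; simpl; rewrite hl by auto; simpl; symmetry; apply app_unapp.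
  - set (h' := fun j => if Z.eq_dec j j0 then pid _ else h j).
    replace (Fib a h) with (pmul (Fib a h') (fib a 0 j0 (h j0))).
    + apply Ppred_mul.
      * apply IH.
        -- intro j; unfold h'; destruct (Z.eq_dec j j0); auto using Ppred_one.
        -- intros j hj; unfold h'; destruct (Z.eq_dec j j0); auto.
           apply hl. simpl. intuition.
      * apply fib_P; auto.
    + assert (hj0 : h' j0 = pid _) by (unfold h'; destruct (Z.eq_dec j0 j0); congruence).
      assert (hne : forall j, j <> j0 -> h' j = h j) by (intros j ne; unfold h'; destruct (Z.eq_dec j j0); congruence).
      clearbody h'.
      apply perm_ext; intro p; destruct (yapp_surj a 0 p) as [y [j ->]];
      unfold Fib, fib, pmul; cbn [fst snd]; rewrite !unapp_app; cbn [fst snd];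
      (destruct (Z.eq_dec j j0) as [->|ne];
       [ destruct (Ydec 0 j0 j0) as [_|n]; [|congruence]; rewrite ?unapp_app; cbn [fst snd]; rewrite hj0; reflexivity
       | destruct (Ydec 0 j j0) as [e|_]; [simpl in *; congruence|]; rewrite ?unapp_app; cbn [fst snd]; rewrite hne by auto; reflexivity]).
Qed.

Fixpoint rng (n : nat) : list Z :=
  match n with O => 0 :: nil | S m => Z.of_nat (S m) :: - Z.of_nat (S m) :: rng m end.

Lemma rng_in : forall n j, Z.abs j <= Z.of_nat n -> In j (rng n).
Proof.
  induction n; intros j hj; simpl.
  - left; lia.
  - destruct (Z.eq_dec j (Z.of_nat (S n))); [left; lia|].
    destruct (Z.eq_dec j (- Z.of_nat (S n))); [right; left; lia|].
    right; right; apply IHn; lia.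
Qed.

Definition tr (n : Z) : perm Z := (fun x => x + - n, fun x => x - - n).

Lemma iota_P : forall k w, gmem _ w -> Ppred (gk k) (iota k w).
Proof.
  induction k; intros w hw.
  - exists (- snd w). reflexivity.
  - destruct hw as [hw [N hN]].
    replace (iota (S k) w) with (pmul (Fib (gk k) (fun j => iota k (fst w j))) (top (gk k) 0 (tr (snd w)))).
    + apply Ppred_mul.
      * apply (Fib_P _ (rng (Z.to_nat N))).
        -- intro j; apply IHk; auto.
        -- intros j hj. rewrite (iota_geq _ _ (gone _)), iota_one; auto.
           apply hN. destruct (Z_le_gt_dec (Z.abs j) N); [|lia].
           exfalso; apply hj, rng_in; lia.
      * apply top_P. exists (- snd w). reflexivity.
    + apply perm_ext; intro p; simpl; rewrite unapp_app; reflexivity.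
Qed.

Fixpoint M (K : nat) : nat := match K with O => O | S K' => (gk K' + S (M K'))%nat end.

Fixpoint dpt (K : nat) : Yt (M K) :=
  match K return Yt (M K) with O => 1 | S K' => yapp (gk K') (M K') (pt 1 (gk K')) (dpt K') end.

Definition cpt (K : nat) : Yt (M K) :=
  match K return Yt (M K) with O => 0 | S K' => yapp (gk K') (M K') (pt 0 (gk K')) (dpt K') end.

Lemma pt_neq : forall a, pt 0 a <> pt 1 a.
Proof. destruct a; simpl; intro h; [lia | inversion h; lia]. Qed.

Lemma cd_neq : forall K, cpt K <> dpt K.
Proof.
  destruct K; simpl; [lia|]. intro h. apply app_inj in h. destruct h as [h _]. exact (pt_neq _ h).
Qed.

Fixpoint EP (K : nat) : gT Wsum -> perm (Yt (M K)) :=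
  match K return gT Wsum -> perm (Yt (M K)) with
  | O => fun _ => pid _
  | S K' => fun x => pmul (fib (gk K') (M K') (cpt K') (iota K' (x (S K'))))
                          (top (gk K') (M K') (EP K' x))
  end.

Lemma EP_isperm : forall K x, isperm (EP K x).
Proof.
  induction K; intros x; simpl.
  - apply isperm_one.
  - apply isperm_mul; [apply isperm_fib, iota_isperm | apply isperm_top, IHK].
Qed.

Lemma EP_fix : forall K x, fst (EP K x) (cpt K) = cpt K /\ snd (EP K x) (cpt K) = cpt K /\
   fst (EP K x) (dpt K) = dpt K /\ snd (EP K x) (dpt K) = dpt K.
Proof.
  induction K; intros x; [repeat split|].
  destruct (IHK x) as [h1 [h2 [h3 h4]]].
  pose proof (cd_neq K) as hne.
  cbn [EP cpt dpt]; unfold pmul, fib, top; cbn [fst snd]; rewrite !unapp_app; cbn [fst snd].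
  repeat split; rewrite ?h4; destruct (Ydec (M K) (dpt K) (cpt K)) as [e|_]; try congruence;
  rewrite ?unapp_app; cbn [fst snd]; rewrite ?h3; reflexivity.
Qed.

Lemma fib_top_comm : forall a b c s l, fst l c = c -> snd l c = c -> isperm l ->
  pmul (fib a b c s) (top a b l) = pmul (top a b l) (fib a b c s).
Proof.
  intros a b c s l h1 h2 [i1 i2].
  apply perm_ext; intro p; destruct (yapp_surj a b p) as [y [v ->]];
  unfold pmul, fib, top; cbn [fst snd]; rewrite !unapp_app; cbn [fst snd].
  - destruct (Ydec b v c) as [->|ne].
    + rewrite unapp_app; cbn [fst snd]. rewrite h1. destruct (Ydec b c c); [|congruence].
      reflexivity.
    + rewrite unapp_app; cbn [fst snd]. destruct (Ydec b (fst l v) c) as [e|_]; [|reflexivity].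
      exfalso. apply ne. rewrite <- (i1 v), e. exact h2.
  - destruct (Ydec b v c) as [->|ne].
    + rewrite unapp_app; cbn [fst snd]. rewrite h2. destruct (Ydec b c c); [|congruence].
      reflexivity.
    + rewrite ?unapp_app; cbn [fst snd]. destruct (Ydec b (snd l v) c) as [e|_]; [|reflexivity].
      exfalso. apply ne. rewrite <- (i2 v), e. exact h1.
Qed.

Lemma EP_mul : forall K x y, EP K (gmul Wsum x y) = pmul (EP K x) (EP K y).
Proof.
  induction K; intros x y.
  - apply perm_ext; reflexivity.
  - change (EP (S K) (gmul Wsum x y)) with
      (pmul (fib (gk K) (M K) (cpt K) (iota K (gmul (Wg (S K)) (x (S K)) (y (S K)))))
            (top (gk K) (M K) (EP K (gmul Wsum x y)))).
    rewrite iota_mul, fib_mul, IHK, top_mul. cbn [EP].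
    transitivity (pmul (fib (gk K) (M K) (cpt K) (iota K (x (S K))))
       (pmul (pmul (fib (gk K) (M K) (cpt K) (iota K (y (S K)))) (top (gk K) (M K) (EP K x)))
             (top (gk K) (M K) (EP K y)))); [reflexivity|].
    destruct (EP_fix K x) as [h1 [h2 _]].
    rewrite fib_top_comm by (auto using EP_isperm). reflexivity.
Qed.

Lemma EP_P : forall K x, (forall i, gmem (Wg i) (x i)) -> Ppred (M K) (EP K x).
Proof.
  induction K; intros x hx.
  - apply Ppred_one.
  - cbn [EP M]. apply Ppred_mul; [apply fib_P, iota_P, hx | apply top_P, IHK, hx].
Qed.

Lemma EP_geq : forall K x y, (forall i, geq (Wg i) (x i) (y i)) -> EP K x = EP K y.
Proof.
  induction K; intros x y h; [reflexivity|].
  cbn [EP]. rewrite (iota_geq _ _ _ (h (S K))), (IHK x y h). reflexivity.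
Qed.

Lemma EP_inj : forall K x y, (forall p, fst (EP K x) p = fst (EP K y) p) ->
  forall i, (i <= K)%nat -> geq (Wg i) (x i) (y i).
Proof.
  induction K; intros x y h i hi.
  - assert (i = 0%nat) by lia; subst; exact I.
  - destruct (EP_fix K x) as [hx1 [hx2 _]], (EP_fix K y) as [hy1 [hy2 _]].
    assert (hE : forall r, fst (EP K x) r = fst (EP K y) r).
    { intro r. destruct (Ydec _ r (cpt K)) as [->|ne]; [congruence|].
      specialize (h (yapp (gk K) (M K) (pt 0 (gk K)) r)).
      cbn [EP] in h; unfold pmul, fib, top in h; cbn [fst snd] in h; rewrite !unapp_app in h; cbn [fst snd] in h.
      destruct (Ydec _ r (cpt K)) as [e|_]; [congruence|].
      rewrite !unapp_app in h; cbn [fst snd] in h. apply app_inj in h. exact (proj2 h). }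
    destruct (Nat.eq_dec i (S K)) as [->|ne].
    + apply iota_inj. intro u.
      specialize (h (yapp (gk K) (M K) u (cpt K))).
      cbn [EP] in h; unfold pmul, fib, top in h; cbn [fst snd] in h; rewrite !unapp_app in h; cbn [fst snd] in h.
      destruct (Ydec _ (cpt K) (cpt K)) as [_|n]; [|congruence].
      rewrite !unapp_app in h; cbn [fst snd] in h. apply app_inj in h. exact (proj1 h).
    + apply IHK; auto; lia.
Qed.

Lemma M_mono : forall N K, (N <= K)%nat -> (M N <= M K)%nat.
Proof. intros N K h; induction h; simpl; lia. Qed.

Lemma M_ge : forall K, (K <= M K)%nat.
Proof. induction K; simpl; lia. Qed.

Lemma EP_compat : forall N K x, (N <= K)%nat -> (forall i, (N < i)%nat -> geq (Wg i) (x i) (gone (Wg i))) ->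
  lift Pg phiP (M N) (EP N x) (M K) = EP K x.
Proof.
  intros N K x hNK hx. induction hNK.
  - apply lift_self.
  - rewrite <- (lift_trans Pg phiP (M N) (EP N x) (M m) (M (S m))) by (apply M_mono; lia).
    rewrite IHhNK. cbn [M EP]. rewrite lift_top.
    rewrite (iota_geq _ _ _ (hx (S m) ltac:(lia))), iota_one, fib_one.
    apply perm_ext; reflexivity.
Qed.

Lemma embed_P : embeds Wsum wrZInf.
Proof.
  change (embeds Wsum (dirlim Pg phiP)).
  refine (embeds_gen Pg phiP _ _ _ _ _ _ M _ _ EP _ _ _ _ _).
  - intros n a x; reflexivity.
  - intros n a b h x; simpl in *; auto.
  - intros n a b c h h' x; simpl in *; congruence.
  - intros n a a' b b' h h' x; simpl in *; rewrite h, h'; reflexivity.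
  - intros n a b h [z r]; simpl in *; rewrite h; reflexivity.
  - intros n a b x; reflexivity.
  - exact M_mono.
  - exact M_ge.
  - intros K x [hx _]; split; [apply EP_isperm | apply EP_P; auto].
  - intros K x y _ _ h. rewrite (EP_geq K x y h). intro; reflexivity.
  - intros K x y _ _. rewrite EP_mul. intro; reflexivity.
  - intros K x y _ _ h. apply EP_inj; auto.
  - intros N K x _ h1 h2. rewrite EP_compat by auto. intro; reflexivity.
Qed.

Theorem lemma22 : embeds Wsum wrZInf /\ embeds Wsum ZwrInf.
Proof.
  split; [exact embed_P | exact embed_Z].
Qed.
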